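(* Let $X=\{0,1\}^{\mathbb Z}$, $\mu=(\tfrac12,\tfrac12)^{\mathbb Z}$, $T$ the two-sided shift, and $d(x,x')=\sum_{k\in\mathbb Z}2^{-|k|-2}|x_k-x'_k|$. Consider $\mathbf X=\mathbf Y=(X,d,\mu,T)$ and choose dense anchor families in $X$ whose first anchor, in both coordinates, is the all-zero sequence $0^\infty$. Then for every $p\ge1$, $\widetilde{\mathrm{Dep}}_{1,1,1,p}(\mathbf X,\mathbf Y)>0$.
   Context: $\mathcal J(T,T)$: Borel probability measures on $X\times X$ with both marginals $\mu$ invariant under $T\times T$. With anchors $(a_r)$, $(b_r)$, for $z_i=(x_i,y_i)$: $\widetilde{\mathcal D}^X_{n,m,R}=\bigl((d(T^ax_i,T^bx_j))_{1\le i,j\le n,0\le a,b<m},(d(T^ax_i,a_r))_{1\le i\le n,0\le a<m,1\le r\le R}\bigr)$, $\widetilde{\mathcal D}^Y_{n,m,R}$ analogously with $y_i$ and $b_r$, $\widetilde\Phi_{n,m,R}(\lambda)=\mathrm{Law}_{\lambda^{\otimes n}}(\widetilde{\mathcal D}^X_{n,m,R},\widetilde{\mathcal D}^Y_{n,m,R})$, and $\widetilde{\mathrm{Dep}}_{n,m,R,p}(\mathbf X,\mathbf Y)=\sup_{\lambda\in\mathcal J(T,T)}W_p(\widetilde\Phi_{n,m,R}(\lambda),\widetilde\Phi_{n,m,R}(\mu\otimes\mu))$, where $W_p$ is the $p$-Wasserstein distance on the finite array cube with a fixed product Euclidean metric. *)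

(* Defs.v *)
From HB Require Import structures.
From mathcomp Require Import all_boot all_order all_algebra.
From mathcomp Require Import all_classical all_reals all_analysis.
Set Implicit Arguments. Unset Strict Implicit. Unset Printing Implicit Defensive.
Import Order.TTheory GRing.Theory Num.Theory.
Local Open Scope classical_set_scope.
Local Open Scope ring_scope.

Definition cylinders : set (set (int -> bool)) :=
  [set A | exists (k : int) (b : bool), A = [set x | x k = b]].

(** X with its product (cylinder) sigma-algebra, which is the Borel
    sigma-algebra of the product topology (= topology of the metric d). *)
Definition X := g_sigma_algebraType cylinders.

Definition Xdisp := (cylinders.-sigma)%mdisp.

Definition shift (x : X) : X := fun k => x (k + 1)%R.

Definition zeroseq : X := fun _ => false.

Definition dX {R : realType} (x x' : X) : R :=
  fine (\esum_(k in [set: int]) ((2%:R ^- (`|k|%N + 2)%N) * (x k != x' k)%:R)%:E)%E.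

Definition is_bernoulli_half {R : realType} (mu : probability X R) : Prop :=
  forall (F : seq int) (v : int -> bool), uniq F ->
    mu [set x : X | forall k, k \in F -> x k = v k] = (2%:R ^- size F)%:E.

(** dense anchor family (a_r)_{r >= 1}, indexed here from 0 *)
Definition dense_family {R : realType} (a : nat -> X) : Prop :=
  forall (x : X) (eps : R), 0 < eps -> exists r, dX x (a r) < eps.

Definition joining {R : realType} (mu : probability X R)
  (lam : probability (X * X)%type R) : Prop :=
  [/\ forall A : set X, measurable A -> lam (A `*` setT) = mu A,
      forall A : set X, measurable A -> lam (setT `*` A) = mu A &
      forall A : set (X * X)%type, measurable A ->
        lam ((fun z : X * X => (shift z.1, shift z.2)) @^-1` A) = lam A].

(** Array space for n = m = R = 1:
    ((d(x,x), d(x,a_1)), (d(y,y), d(y,b_1))). *)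
Definition Arr (R : realType) := ((R * R) * (R * R))%type.

Definition D111 {R : realType} (a b : nat -> X) (z : X * X) : Arr R :=
  ((dX z.1 z.1, dX z.1 (a 0%N)), (dX z.2 z.2, dX z.2 (b 0%N))).

Definition Phi111 {R : realType} (a b : nat -> X)
  (lam : set (X * X)%type -> \bar R) : set (Arr R) -> \bar R :=
  pushforward lam (D111 a b).

Definition arr_dist {R : realType} (u v : Arr R) : R :=
  Num.sqrt ((u.1.1 - v.1.1) ^+ 2 + (u.1.2 - v.1.2) ^+ 2
          + (u.2.1 - v.2.1) ^+ 2 + (u.2.2 - v.2.2) ^+ 2).

Definition coupling {R : realType} (P Q : set (Arr R) -> \bar R)
  (pi : probability (Arr R * Arr R)%type R) : Prop :=
  (forall A : set (Arr R), measurable A -> pi (A `*` setT) = P A) /\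
  (forall B : set (Arr R), measurable B -> pi (setT `*` B) = Q B).

Definition Wass {R : realType} (p : R) (P Q : set (Arr R) -> \bar R) : \bar R :=
  poweR (ereal_inf [set (\int[pi]_w ((arr_dist w.1 w.2) `^ p)%:E)%E
                   | pi in [set pi | coupling P Q pi]]) p^-1.

Definition Dep111 {R : realType} (mu : probability X R) (a b : nat -> X) (p : R)
  : \bar R :=
  ereal_sup [set Wass p (Phi111 a b lam) (Phi111 a b (mu \x mu)%E)
            | lam in [set lam | joining mu lam]].

(* Main.v *)
Require Import Defs.
From HB Require Import structures.
From mathcomp Require Import all_boot all_order all_algebra.
From mathcomp Require Import all_classical all_reals all_analysis.
From mathcomp Require Import zify ring lra.
From mathcomp Require Import measurable_realfun.
Import Order.TTheory GRing.Theory Num.Theory.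
Local Open Scope classical_set_scope.
Local Open Scope ring_scope.

Lemma pow2_split {R : realType} (i m : nat) :
  (2%:R : R) ^- (i + m + 2)%N = (2%:R ^- (m + 1)%N) / (2 ^ (i + 0.+1))%:R.
Proof.
rewrite natrX -invfM -exprD; congr (_ ^-1); congr (_ ^+ _); lia.
Qed.

Lemma series_bound {R : realType} (u : nat -> \bar R) m :
  (forall n, 0 <= u n)%E -> (forall n, (n < m)%N -> u n = 0%E) ->
  (forall n, u n <= (2%:R ^- (n + 2)%N)%:E)%E ->
  (\sum_(n <oo) u n <= (2%:R ^- (m + 1)%N)%:E)%E.
Proof.
move=> u0 um ub.
rewrite (nneseries_split 0 m) // add0n.
rewrite big1_seq ?add0e; last first.
  by move=> k; rewrite mem_index_iota => /andP[_ km]; exact: um.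
rewrite -nneseries_addn //.
have := @cvg_geometric_eseries_half R (2%:R ^- (m + 1)%N) 0.
move=> /cvg_lim => /(_ (@ereal_hausdorff R)); rewrite expr0 divr1 => <-.
apply: (@lee_nneseries R _ _ xpredT 0) => // n _.
by rewrite -pow2_split.
Qed.

Lemma esum_int_bound {R : realType} (a : int -> \bar R) m :
  (forall k, 0 <= a k)%E -> (forall k, (`|k| < m)%N -> a k = 0%E) ->
  (forall k, a k <= (2%:R ^- (`|k|%N + 2)%N)%:E)%E ->
  (\esum_(k in [set: int]) a k <=
    (2%:R ^- (m + 1)%N + 2%:R ^- (m.-1 + 1)%N)%:E)%E.
Proof.
move=> a0 am ab.
rewrite (esumID [set k : int | (0 <= k)%R]) // setTI EFinD.
apply: leeD.
- have -> : [set k : int | (0 <= k)%R] = Posz @` [set: nat].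
    apply/seteqP; split => [k /= k0|k [n _ <-] //].
    by exists `|k|%N => //; rewrite gez0_abs.
  rewrite esum_image; last by move=> i j _ _ [].
  rewrite -nneseries_esumT //.
  apply: series_bound => // n.
  by move=> nm; apply: am.
- have -> : [set: int] `&` ~` [set k : int | (0 <= k)%R] = Negz @` [set: nat].
    apply/seteqP; split => [k /= [_ k0]|k [n _ <-] //].
    case: k k0 => [n|n] // _; by exists n.
  rewrite esum_image; last by move=> i j _ _ [].
  rewrite -nneseries_esumT //.
  apply: series_bound => // n.
    move=> nm; apply: am => /=; move: nm; case: (m) => [|m'] /=; lia.
  apply: le_trans (ab _) _; rewrite lee_fin /=.
  rewrite lef_pV2 ?posrE ?exprn_gt0 //.
  rewrite ler_eXn2l // ?ltr1n //.
Qed.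

Definition dterm {R : realType} (x : X) (k : int) : \bar R :=
  ((2%:R ^- (`|k|%N + 2)%N) * (x k != zeroseq k)%:R)%:E.

Lemma dterm_ge0 {R : realType} x k : (0 <= @dterm R x k)%E.
Proof. by rewrite lee_fin mulr_ge0 // invr_ge0 exprn_ge0. Qed.

Lemma dterm_le {R : realType} x k : (@dterm R x k <= (2%:R ^- (`|k|%N + 2)%N)%:E)%E.
Proof.
rewrite lee_fin; case: (x k != zeroseq k) => /=; first by rewrite mulr1.
by rewrite mulr0 invr_ge0 exprn_ge0.
Qed.

Lemma dX_bound {R : realType} (x : X) m :
  (forall k, (`|k| < m)%N -> x k = false) ->
  (\esum_(k in [set: int]) @dterm R x k <=
    (2%:R ^- (m + 1)%N + 2%:R ^- (m.-1 + 1)%N)%:E)%E.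
Proof.
move=> xm; apply: esum_int_bound => //.
- exact: dterm_ge0.
- by move=> k km; rewrite /dterm xm // mulr0.
- exact: dterm_le.
Qed.

Lemma dX_fin {R : realType} (x : X) :
  \esum_(k in [set: int]) @dterm R x k \is a fin_num.
Proof.
rewrite ge0_fin_numE; last by apply: esum_ge0 => k _; exact: dterm_ge0.
apply: le_lt_trans (@dX_bound R x 0 _) _ => //.
by rewrite ltry.
Qed.

Lemma dXE {R : realType} (x : X) :
  (dX x zeroseq)%:E = \esum_(k in [set: int]) @dterm R x k.
Proof. by rewrite /dX fineK //; exact: dX_fin. Qed.

Lemma dX_small {R : realType} (x : X) :
  (forall k, (`|k| < 3)%N -> x k = false) ->
  dX x zeroseq <= (3%:R / 16%:R : R).
Proof.
move=> h; rewrite -lee_fin dXE.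
apply: (le_trans (@dX_bound R x 3 h)); rewrite lee_fin /=.
rewrite -!exprVn. rewrite !exprS expr0. lra.
Qed.

Lemma dX_big {R : realType} (x : X) :
  x 0 = true -> (4%:R^-1 : R) <= dX x zeroseq.
Proof.
move=> h; rewrite -lee_fin dXE.
apply: esum_ge; exists [set 0%R]; first by split => //; exact: finite_set1.
rewrite fsbig_set1 /dterm h /= mulr1 lee_fin.
rewrite -exprVn !exprS expr0 mulr1. lra.
Qed.
Definition cyl (F : seq int) (v : int -> bool) : set X :=
  [set x | forall k, k \in F -> x k = v k].

Definition Gc : set (set X) :=
  [set A | A = set0 \/ exists F v, uniq F /\ A = cyl F v].

Lemma measurable_coord (k : int) (b : bool) : measurable [set x : X | x k = b].
Proof. by apply: sub_sigma_algebra; exists k, b. Qed.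

Lemma cyl_measurable F v : measurable (cyl F v).
Proof.
elim: F => [|k F ih].
  by rewrite (_ : cyl [::] v = setT) //; apply/seteqP; split => x //= _ k.
rewrite (_ : cyl (k :: F) v = [set x | x k = v k] `&` cyl F v).
  exact: measurableI (measurable_coord _ _) ih.
apply/seteqP; split => x /= h.
  by split; [apply: h; rewrite mem_head|move=> j jF; apply: h; rewrite inE jF orbT].
by move=> j; rewrite inE => /orP[/eqP->|]; [case: h|case: h => _; apply].
Qed.

Lemma Gc_measurable : Gc `<=` measurable.
Proof. by move=> A [->|[F [v [_ ->]]]]; [exact: measurable0|exact: cyl_measurable]. Qed.

Lemma measurable_Gc : @measurable _ X = <<s Gc >>.
Proof.
apply/seteqP; split.
  apply: smallest_sub; first exact: smallest_sigma_algebra.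
  move=> A [k [b ->]]; apply: sub_sigma_algebra; right; exists [:: k], (fun _ => b).
  split => //; apply/seteqP; split => x /=.
    by move=> h j; rewrite inE => /eqP->.
  by move=> h; apply: h; rewrite mem_head.
apply: smallest_sub; first exact: sigma_algebra_measurable.
exact: Gc_measurable.
Qed.

Lemma Gc_setI : setI_closed Gc.
Proof.
move=> A B [->|[F1 [v1 [u1 ->]]]]; first by left; rewrite set0I.
move=> [->|[F2 [v2 [u2 ->]]]]; first by left; rewrite setI0.
have [[k [kF1 kF2 kv]]|nc] := pselect (exists k, [/\ k \in F1, k \in F2 & v1 k != v2 k]).
  left; apply/seteqP; split => x //= [h1 h2].
  by move: kv; rewrite -(h1 _ kF1) -(h2 _ kF2) eqxx.
right; exists (undup (F1 ++ F2)), (fun k => if k \in F1 then v1 k else v2 k).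
split; first exact: undup_uniq.
apply/seteqP; split => x /=.
  move=> [h1 h2] k; rewrite mem_undup mem_cat.
  case: ifP => kF1 /=; first by move=> _; exact: h1.
  exact: h2.
move=> h; split => k kF.
  by have := h k; rewrite mem_undup mem_cat kF /=; apply.
have := h k; rewrite mem_undup mem_cat kF orbT; move=> /(_ isT).
case: ifP => // kF1 ->; apply/eqP; apply: contra_notT nc => nv.
by exists k; split => //; rewrite eq_sym.
Qed.

Lemma shift_preimage_coord (k : int) (b : bool) :
  Defs.shift @^-1` [set x : X | x k = b] = [set x : X | x (k + 1)%R = b].
Proof. by []. Qed.

Lemma shift_measurable : measurable_fun setT Defs.shift.
Proof.
apply: (@measurability _ _ X X setT Defs.shift cylinders); first reflexivity.
move=> _ [A [k [b ->]] <-]; rewrite setTI.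
exact: measurable_coord.
Qed.

HB.instance Definition _ := isMeasurableFun.Build _ _ _ _ Defs.shift shift_measurable.

Lemma shift_cyl F v :
  Defs.shift @^-1` cyl F v = cyl (map (fun k => k + 1)%R F) (fun j => v (j - 1)%R).
Proof.
apply/seteqP; split => x /= h.
  move=> j /mapP[k kF ->]; rewrite addrK; exact: h.
move=> k kF; have := h (k + 1)%R; rewrite addrK; apply.
by apply/mapP; exists k.
Qed.

Lemma shift_invariant {R : realType} (mu : probability X R) :
  is_bernoulli_half mu ->
  forall A, measurable A -> mu (Defs.shift @^-1` A) = mu A.
Proof.
move=> hb A mA.
have := @measure_unique _ R X Gc (fun _ => setT) measurable_Gc Gc_setI _ _
  (distribution mu Defs.shift) mu _ _ A mA; apply.
- move=> _; right; exists [::], (fun _ => false); split => //.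
  by apply/seteqP; split => x //= _ k.
- by apply/seteqP; split => x // _; exists 0%N.
- move=> B [->|[F [v [uF ->]]]].
    by rewrite !measure0.
  change (mu (Defs.shift @^-1` cyl F v) = mu (cyl F v)).
  rewrite shift_cyl hb ?hb ?size_map //.
  rewrite map_inj_uniq // => i j; exact: addIr.
- move=> _; change (mu (Defs.shift @^-1` setT) < +oo)%E.
  by rewrite preimage_setT probability_setT ltry.
Qed.

Lemma esum_int_split {R : realType} (a : int -> \bar R) :
  (forall k, 0 <= a k)%E ->
  \esum_(k in [set: int]) a k =
    (\sum_(n <oo) a (Posz n) + \sum_(n <oo) a (Negz n))%E.
Proof.
move=> a0.
rewrite (esumID [set k : int | (0 <= k)%R]) //.
have -> : [set: int] `&` ~` [set k : int | (0 <= k)%R] = Negz @` [set: nat].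
  apply/seteqP; split => [k /= [_ k0]|k [n _ <-] //].
  case: k k0 => [n|n] // _; by exists n.
rewrite setTI.
have -> : [set k : int | (0 <= k)%R] = Posz @` [set: nat].
  apply/seteqP; split => [k /= k0|k [n _ <-] //].
  by exists `|k|%N => //; rewrite gez0_abs.
rewrite esum_image; last by move=> i j _ _ [].
rewrite esum_image; last by move=> i j _ _ [].
by rewrite -!nneseries_esumT.
Qed.

Lemma measurable_const_set {d} {T : measurableType d} (P : Prop) :
  measurable [set _ : T | P].
Proof.
have [h|h] := pselect P.
  by rewrite (_ : [set _ | P] = setT) //; apply/seteqP; split.
by rewrite (_ : [set _ | P] = set0) //; apply/seteqP; split.
Qed.

Lemma measurable_coord_fun {d} {T : measurableType d} (k : int) (g : bool -> T) :
  measurable_fun setT (fun x : X => g (x k)).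
Proof.
move=> _ B mB; rewrite setTI.
rewrite (_ : _ @^-1` _ = ([set x : X | x k = true] `&` [set _ | B (g true)]) `|`
                        ([set x : X | x k = false] `&` [set _ | B (g false)])).
  apply: measurableU; apply: measurableI; try exact: measurable_coord;
    exact: measurable_const_set.
apply/seteqP; split => x /=.
  by case: (x k) => h; [left|right].
by case=> -[-> //].
Qed.

Definition eX {R : realType} (x : X) : \bar R := \esum_(k in [set: int]) @dterm R x k.

Lemma measurable_eX {R : realType} : measurable_fun setT (@eX R).
Proof.
rewrite /eX.
have -> : (fun x => \esum_(k in [set: int]) @dterm R x k) =
  ((fun x => \sum_(n <oo | n \in predT) @dterm R x (Posz n)) \+
   (fun x => \sum_(n <oo | n \in predT) @dterm R x (Negz n)))%E.
  apply/funext => x; rewrite esum_int_split //; last exact: dterm_ge0.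
apply: emeasurable_funD; apply: ge0_emeasurable_sum.
- by move=> k x _ _; exact: dterm_ge0.
- move=> k _; exact: (measurable_coord_fun (Posz k) (fun b => ((2%:R ^- (`|Posz k|%N + 2)%N) * (b != zeroseq (Posz k))%:R)%:E)).
- by move=> k x _ _; exact: dterm_ge0.
- move=> k _; exact: (measurable_coord_fun (Negz k) (fun b => ((2%:R ^- (`|Negz k|%N + 2)%N) * (b != zeroseq (Negz k))%:R)%:E)).
Qed.

Definition diag (x : X) : (X * X)%type := (x, x).

Lemma diag_measurable : measurable_fun setT diag.
Proof. exact: measurable_fun_pair. Qed.

HB.instance Definition _ := isMeasurableFun.Build _ _ _ _ diag diag_measurable.

Lemma joining_diag {R : realType} (mu : probability X R) :
  is_bernoulli_half mu -> joining mu (distribution mu diag).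
Proof.
move=> hb; split.
- move=> A mA; change (mu (diag @^-1` (A `*` setT)) = mu A).
  by congr (mu _); apply/seteqP; split => x //= [].
- move=> A mA; change (mu (diag @^-1` (setT `*` A)) = mu A).
  by congr (mu _); apply/seteqP; split => x //= [].
- move=> A mA.
  change (mu (diag @^-1` ((fun z : X * X => (Defs.shift z.1, Defs.shift z.2)) @^-1` A))
     = mu (diag @^-1` A)).
  have -> : diag @^-1` ((fun z : X * X => (Defs.shift z.1, Defs.shift z.2)) @^-1` A)
      = Defs.shift @^-1` (diag @^-1` A) by [].
  apply: shift_invariant => //.
  by rewrite -[X in measurable X]setTI; apply: diag_measurable.
Qed.

Definition Dg {R : realType} : set (Arr R) := [set u | u.1.2 = u.2.2].
Definition Bx {R : realType} : set (Arr R) :=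
  [set u | u.1.2 <= 3%:R / 16%:R /\ 4%:R^-1 <= u.2.2].

Lemma m12 {R : realType} : measurable_fun setT (fun u : Arr R => u.1.2).
Proof. exact: measurableT_comp measurable_snd measurable_fst. Qed.
Lemma m22 {R : realType} : measurable_fun setT (fun u : Arr R => u.2.2).
Proof. exact: measurableT_comp measurable_snd measurable_snd. Qed.

Lemma Dg_measurable {R : realType} : measurable (@Dg R).
Proof.
have h := measurable_fun_eqr m12 m22.
rewrite (_ : Dg = (fun u : Arr R => u.1.2 == u.2.2) @^-1` [set true]).
  by rewrite -[X in measurable X]setTI; apply: h => //.
by apply/seteqP; split => u /= /eqP.
Qed.

Lemma Bx_measurable {R : realType} : measurable (@Bx R).
Proof.
rewrite (_ : Bx = ((fun u : Arr R => u.1.2) @^-1` `]-oo, 3%:R / 16%:R]) `&`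
                  ((fun u : Arr R => u.2.2) @^-1` `[4%:R^-1, +oo[)).
  apply: measurableI.
    by rewrite -[X in measurable X]setTI; apply: m12 => //; exact: measurable_itv.
  by rewrite -[X in measurable X]setTI; apply: m22 => //; exact: measurable_itv.
by apply/seteqP; split => u /=; rewrite !in_itv /= ?andbT.
Qed.

Lemma integrand_measurable {R : realType} (p : R) :
  measurable_fun setT (fun w : (Arr R * Arr R)%type => ((arr_dist w.1 w.2) `^ p)%:E).
Proof.
apply/measurable_EFinP.
apply: (measurableT_comp (measurable_powR p)).
apply: (measurableT_comp (continuous_measurable_fun (@sqrt_continuous R))).
have f1 : measurable_fun setT (fun w : (Arr R * Arr R)%type => w.1.1.1).
  by apply: measurableT_comp measurable_fst (measurableT_comp measurable_fst measurable_fst).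
have f2 : measurable_fun setT (fun w : (Arr R * Arr R)%type => w.1.1.2).
  by apply: measurableT_comp measurable_snd (measurableT_comp measurable_fst measurable_fst).
have f3 : measurable_fun setT (fun w : (Arr R * Arr R)%type => w.1.2.1).
  by apply: measurableT_comp measurable_fst (measurableT_comp measurable_snd measurable_fst).
have f4 : measurable_fun setT (fun w : (Arr R * Arr R)%type => w.1.2.2).
  by apply: measurableT_comp measurable_snd (measurableT_comp measurable_snd measurable_fst).
have g1 : measurable_fun setT (fun w : (Arr R * Arr R)%type => w.2.1.1).
  by apply: measurableT_comp measurable_fst (measurableT_comp measurable_fst measurable_snd).
have g2 : measurable_fun setT (fun w : (Arr R * Arr R)%type => w.2.1.2).
  by apply: measurableT_comp measurable_snd (measurableT_comp measurable_fst measurable_snd).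
have g3 : measurable_fun setT (fun w : (Arr R * Arr R)%type => w.2.2.1).
  by apply: measurableT_comp measurable_fst (measurableT_comp measurable_snd measurable_snd).
have g4 : measurable_fun setT (fun w : (Arr R * Arr R)%type => w.2.2.2).
  by apply: measurableT_comp measurable_snd (measurableT_comp measurable_snd measurable_snd).
rewrite /arr_dist /=.
apply: measurable_funD; [apply: measurable_funD; [apply: measurable_funD|]|];
  apply: measurable_funX; exact: measurable_funB.
Qed.

Lemma dist_ge12 {R : realType} (u v : Arr R) : `|u.1.2 - v.1.2| <= arr_dist u v.
Proof.
rewrite /arr_dist -sqrtr_sqr; apply: ler_wsqrtr.
have := sqr_ge0 (u.1.1 - v.1.1); have := sqr_ge0 (u.2.1 - v.2.1);
have := sqr_ge0 (u.2.2 - v.2.2); lra.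
Qed.

Lemma dist_ge22 {R : realType} (u v : Arr R) : `|u.2.2 - v.2.2| <= arr_dist u v.
Proof.
rewrite /arr_dist -sqrtr_sqr; apply: ler_wsqrtr.
have := sqr_ge0 (u.1.1 - v.1.1); have := sqr_ge0 (u.2.1 - v.2.1);
have := sqr_ge0 (u.1.2 - v.1.2); lra.
Qed.

Lemma dist_gap {R : realType} (u v : Arr R) : Dg u -> Bx v ->
  32%:R^-1 <= arr_dist u v.
Proof.
rewrite /Dg /Bx /= => uD [v1 v2].
have h1 := dist_ge12 u v; have h2 := dist_ge22 u v.
rewrite uD in h1.
have a1 := ler_norm (u.2.2 - v.1.2).
have a2 := ler_norm (- (u.2.2 - v.2.2)); rewrite normrN in a2.
lra.
Qed.

Lemma coupling_lb {R : realType} (P Q : set (Arr R) -> \bar R)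
  (pi : probability (Arr R * Arr R)%type R) (p c : R) :
  0 <= p -> 0 <= c -> coupling P Q pi -> P (~` Dg) = 0%E -> (c%:E <= Q Bx)%E ->
  (((32%:R^-1) `^ p * c)%:E <= \int[pi]_w ((arr_dist w.1 w.2) `^ p)%:E)%E.
Proof.
move=> p0 c0 [cP cQ] PD QB.
pose I : set (Arr R * Arr R)%type := (Dg `*` setT) `&` (setT `*` Bx).
have mI : measurable I.
  apply: measurableI; apply: measurableX => //; [exact: Dg_measurable|exact: Bx_measurable].
have cI : (c%:E <= pi I)%E.
  apply: (le_trans QB); rewrite -cQ; last exact: Bx_measurable.
  have mDc : measurable (~` (@Dg R) `*` [set: Arr R]).
    by apply: measurableX => //; apply: measurableC; exact: Dg_measurable.
  apply: (le_trans (@le_measure _ _ _ pi (setT `*` Bx) (I `|` (~` Dg `*` setT)) _ _ _)).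
  - by rewrite inE; apply: measurableX => //; exact: Bx_measurable.
  - by rewrite inE; apply: measurableU.
  - move=> w [_ wB]; have [wD|wD] := pselect (Dg w.1); first by left.
    by right.
  apply: (le_trans (measureU2 _ mI mDc)).
  rewrite [X in (_ + X)%E](_ : _ = 0%E) ?adde0 //.
  rewrite -PD; apply: cP; apply: measurableC; exact: Dg_measurable.
set k := (32%:R^-1 : R) `^ p.
have k0 : 0 <= k by exact: powR_ge0.
have H1 : ((k * c)%:E <= \int[pi]_w (k * \1_I w)%:E)%E.
  rewrite (@integralZl_indic _ _ _ pi setT measurableT (fun _ => I) k) //; last first.
    by move=> /lt_le_trans /(_ k0); rewrite ltxx.
  rewrite integral_indic // setIT EFinM.
  exact: lee_wpmul2l.
apply: (le_trans H1).
apply: ge0_le_integral => //.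
- by move=> w _; rewrite lee_fin mulr_ge0.
- apply/measurable_EFinP; apply: measurable_funM => //.
- exact: integrand_measurable.
move=> w _; rewrite lee_fin indicE.
have [wI|wI] := boolP (w \in I); last by rewrite mulr0 powR_ge0.
rewrite mulr1; move: wI; rewrite inE => -[[wD _] [_ wB]].
have g := @dist_gap R _ _ wD wB.
apply: ge0_ler_powR => //; rewrite ?nnegrE //.
by apply: le_trans g.
Qed.

Lemma small_int_mem (k : int) : (`|k| < 3)%N -> k \in [:: -2; -1; 0; 1; 2]%R.
Proof.
case: k => [[|[|[|n]]]|[|[|n]]] //=.
Qed.

Lemma S_measurable {R : realType} (P : \bar R -> Prop) :
  measurable P -> measurable [set x : X | P (eX x)].
Proof.
move=> mP; rewrite -[X in measurable X]setTI.
exact: (@measurable_eX R) mP.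
Qed.

Lemma Q_lb {R : realType} (mu : probability X R) (a b : nat -> X) :
  is_bernoulli_half mu -> a 0%N = zeroseq -> b 0%N = zeroseq ->
  (((2%:R ^- 5 * 2%:R ^- 1) : R)%:E <= Phi111 a b (mu \x mu)%E Bx)%E.
Proof.
move=> hb a0 b0.
rewrite /Phi111 /pushforward.
pose S1 := [set x : X | (@eX R x <= (3%:R / 16%:R)%:E)%E].
pose S2 := [set x : X | ((4%:R^-1)%:E <= @eX R x)%E].
have mS1 : measurable S1.
  apply: (@S_measurable R (fun e => (e <= (3%:R / 16%:R)%:E)%E)).
  rewrite (_ : (fun e => _) = [set` `]-oo, (3%:R / 16%:R : R)%:E]]).
    exact: emeasurable_itv.
  by apply/seteqP; split => e /=; rewrite in_itv.
have mS2 : measurable S2.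
  apply: (@S_measurable R (fun e => ((4%:R^-1)%:E <= e)%E)).
  rewrite (_ : (fun e => _) = [set` `[(4%:R^-1 : R)%:E, +oo[]).
    exact: emeasurable_itv.
  by apply/seteqP; split => e /=; rewrite in_itv /= andbT.
have -> : @D111 R a b @^-1` (@Bx R) = S1 `*` S2.
  apply/seteqP; split => -[x y]; rewrite /D111 /Bx /S1 /S2 /eX /= a0 b0 -!dXE !lee_fin //.
rewrite product_measure1E //.
have h1 : ((2%:R ^- 5 : R)%:E <= mu S1)%E.
  have <- : mu (cyl [:: -2; -1; 0; 1; 2]%R (fun _ => false)) = (2%:R ^- 5)%:E.
    exact: hb.
  apply: le_measure; rewrite ?inE //; first exact: cyl_measurable.
  move=> x /= hx; rewrite /S1 /eX /= -dXE lee_fin; apply: dX_small => k /small_int_mem.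
  exact: hx.
have h2 : ((2%:R ^- 1 : R)%:E <= mu S2)%E.
  have <- : mu (cyl [:: 0]%R (fun _ => true)) = (2%:R ^- 1)%:E.
    exact: hb.
  apply: le_measure; rewrite ?inE //; first exact: cyl_measurable.
  move=> x /= hx; rewrite /S2 /eX /= -dXE lee_fin; apply: dX_big.
  by apply: hx; rewrite mem_head.
rewrite EFinM; apply: lee_pmul => //.
Qed.

Lemma P_offdiag {R : realType} (mu : probability X R) (a b : nat -> X) :
  a 0%N = zeroseq -> b 0%N = zeroseq ->
  Phi111 a b (distribution mu diag) (~` Dg) = 0%E.
Proof.
move=> a0 b0; rewrite /Phi111 /pushforward.
change (mu (diag @^-1` (@D111 R a b @^-1` (~` (@Dg R)))) = 0%E).
rewrite (_ : diag @^-1` _ = set0) ?measure0 //.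
apply/seteqP; split => x //=; rewrite /D111 /Dg /= a0 b0.
by apply.
Qed.

Theorem proposition22 (R : realType) (mu : probability X R)
  (a b : nat -> X) (p : R) :
  is_bernoulli_half mu ->
  dense_family (R := R) a -> dense_family (R := R) b ->
  a 0%N = zeroseq -> b 0%N = zeroseq ->
  1 <= p ->
  (0 < Dep111 mu a b p)%E.
Proof.
move=> hb _ _ a0 b0 p1.
have p0 : 0 <= p by lra.
pose lam := distribution mu diag.
rewrite /Dep111.
apply: (lt_le_trans _ (ereal_sup_ubound _)); last first.
  by exists lam => //; exact: joining_diag.
rewrite /Wass; apply: poweR_gt0.
pose c : R := 2%:R ^- 5 * 2%:R ^- 1.
have c0 : 0 < c by rewrite /c mulr_gt0 // invr_gt0 exprn_gt0.
have k0 : 0 < (32%:R^-1 : R) `^ p by apply: powR_gt0.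
apply: (@lt_le_trans _ _ ((32%:R^-1 `^ p * c)%:E)).
  by rewrite lte_fin mulr_gt0.
apply: le_ereal_inf_tmp => _ [pi /= cpl <-].
apply: (@coupling_lb R _ _ pi p c p0 (ltW c0) cpl).
  exact: P_offdiag.
exact: Q_lb.
Qed.
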